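(* Let $\delta\in(0,1)$, let $\mathbf{k}$ be a reproducing kernel, and run $\mathrm{KH}(\delta)$ on an input sequence $\mathcal{X}_{\mathrm{in}}=(x_i)_{i=1}^{n_{\mathrm{in}}}$ with $n_{\mathrm{in}}\ge2$ even. Then there is an event $\mathcal{E}$ with probability at least $1-\delta/2$ such that, for all $i\in[n_{\mathrm{in}}/2]$, $\frac{1}{2i}\psi_i$ is $(\mathbf{k},\nu_i)$-sub-Gaussian on $\mathcal{E}$ with $$\nu_i=b_{\max,i}\frac{\sqrt{\log(2n_{\mathrm{in}}/\delta)}}{2i}=\frac{\sqrt{\log(2n_{\mathrm{in}}/\delta)}}{2i}\max_{j\in[i]}\mathrm{MMD}_{\mathbf{k}}(\delta_{x_{2j-1}},\delta_{x_{2j}})\le\frac{\sqrt{\log(2n_{\mathrm{in}}/\delta)}}{2i}\cdot2\min\Big(\max_{x\in\mathcal{X}_{\mathrm{in}}}\sqrt{\mathbf{k}(x,x)},\ \max_{x\in\mathcal{X}_{\mathrm{in}}}\mathrm{MMD}_{\mathbf{k}}(\delta_x,\mathbb{P}_{\mathrm{in}})\Big).$$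
   Context: Kernel Halving $\mathrm{KH}(\delta)$: input $(x_1,\dots,x_{n_{\mathrm{in}}})$ with $n_{\mathrm{in}}$ even and kernel $\mathbf{k}$ with RKHS $\mathcal{H}_{\mathbf{k}}$. Set ordered lists $S_1=S_2=\emptyset$, $\psi_0=0\in\mathcal{H}_{\mathbf{k}}$, $b_{\max,0}=0$. For $i=1,\dots,n_{\mathrm{in}}/2$: let $(x,x')=(x_{2i-1},x_{2i})$, $f_i=\mathbf{k}(x_{2i-1},\cdot)-\mathbf{k}(x_{2i},\cdot)$, $b_i=\|f_i\|_{\mathbf{k}}=\sqrt{\mathbf{k}(x,x)+\mathbf{k}(x',x')-2\mathbf{k}(x,x')}$, $b_{\max,i}=\max(b_i,b_{\max,i-1})$, $a_i=b_ib_{\max,i}(\tfrac12+\log(2n_{\mathrm{in}}/\delta))$, $\alpha_i=\langle\psi_{i-1},f_i\rangle_{\mathbf{k}}=\sum_{j=1}^{2i-2}(\mathbf{k}(x_j,x)-\mathbf{k}(x_j,x'))-2\sum_{z\in S_1}(\mathbf{k}(z,x)-\mathbf{k}(z,x'))$. With probability $\min(1,\tfrac12(1-\alpha_i/a_i)_+)$ (fresh randomness) set $\eta_i=1$ and swap $x$ and $x'$; otherwise $\eta_i=-1$. Append $x$ to $S_1$, $x'$ to $S_2$, set $\psi_i=\psi_{i-1}+\eta_if_i$ (so $\psi_i=\sum_{y\in S_2}\mathbf{k}(y,\cdot)-\sum_{y\in S_1}\mathbf{k}(y,\cdot)$). Output $\mathcal{X}_{\mathrm{out}}=S_1$. Here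 $(a)_+=\max(a,0)$. $\mathbb{P}_{\mathrm{in}}$ is the empirical distribution of $\mathcal{X}_{\mathrm{in}}$, $\delta_x$ the point mass at $x$, and $\mathrm{MMD}_{\mathbf{k}}(\mu,\tilde\mu)=\sup_{\|f\|_{\mathbf{k}}\le1}|\mathbb{E}_\mu f-\mathbb{E}_{\tilde\mu}f|$. A random $\phi\in\mathcal{H}_{\mathbf{k}}$ is $(\mathbf{k},\nu)$-sub-Gaussian on $\mathcal{E}$ if $\mathbb{E}[\exp(\langle f,\phi\rangle_{\mathbf{k}})\mathbf{1}_{\mathcal{E}}]\le\exp(\frac{\nu^2}{2}\|f\|_{\mathbf{k}}^2)$ for all $f\in\mathcal{H}_{\mathbf{k}}$. *)

(* Defs.v *)
From HB Require Import structures.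
From mathcomp Require Import all_boot all_order all_algebra.
From mathcomp Require Import boolp classical_sets reals.
From mathcomp.analysis Require Import sequences exp.
Set Implicit Arguments. Unset Strict Implicit. Unset Printing Implicit Defensive.
Import Order.TTheory GRing.Theory Num.Theory.
Local Open Scope ring_scope.

(* The RKHS H_k is represented by such a
   space together with a feature map Phi with k y z = <Phi y, Phi z>;
   a function f in H_k is represented by g : H, with f(y) = <g, Phi y>. *)
Definition inner_product (R : realType) (H : lmodType R) (ip : H -> H -> R) : Prop :=
  [/\ forall u v, ip u v = ip v u,
      forall a u v w, ip (a *: u + v) w = a * ip u w + ip v w,
      forall v, 0 <= ip v v &
      forall v, ip v v = 0 -> v = 0].

Section KernelHalving.
Variables (R : realType) (X : Type) (H : lmodType R) (ip : H -> H -> R)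
  (Phi : X -> H) (k : X -> X -> R) (m : nat) (x : nat -> X) (delta : R).

(* Input X_in = (x 0, ..., x (2m-1)), n_in = 2m; the paper's pair
   (x_{2i-1}, x_{2i}) (i = 1..m) is (x (2j), x (2j+1)) with j = i-1. *)
Definition n_in : nat := (2 * m)%N.
Definition logterm : R := ln (2 * n_in%:R / delta).

(* f_{j+1} and b_{j+1} (0-based step index j) *)
Definition fv (j : nat) : H := Phi (x (2 * j)) - Phi (x (2 * j).+1).
Definition bb (j : nat) : R :=
  Num.sqrt (k (x (2 * j)) (x (2 * j)) + k (x (2 * j).+1) (x (2 * j).+1)
            - 2 * k (x (2 * j)) (x (2 * j).+1)).
(* b_{max,i} (paper's 1-based i), with b_{max,0} = 0 *)
Definition bmax (i : nat) : R := \big[Num.max/0]_(j < i) bb j.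

(* Outcomes of the algorithm's randomness: the sign sequence
   (e j = true  <->  eta_{j+1} = +1, i.e. the pair was swapped). *)
Definition signs := {ffun 'I_m -> bool}.

Definition psi (e : signs) (i : nat) : H :=
  \sum_(j < m | (j < i)%N) (if e j then fv j else - fv j).

Definition alpha (e : signs) (j : nat) : R := ip (psi e j) (fv j).
Definition aa (j : nat) : R := bb j * bmax j.+1 * (2^-1 + logterm).
(* swap probability at step j+1 (depends only on e_0..e_{j-1}) *)
Definition pswap (e : signs) (j : nat) : R :=
  Num.min 1 (2^-1 * Num.max 0 (1 - alpha e j / aa j)).

(* law of the sign sequence produced by KH(delta) *)
Definition Pkh (e : signs) : R :=
  \prod_(j < m) (if e j then pswap e j else 1 - pswap e j).

Definition prob (E : {set signs}) : R := \sum_(e in E) Pkh e.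

Definition subgaussian_on (phi : signs -> H) (nu : R) (E : {set signs}) : Prop :=
  forall g : H,
    \sum_(e in E) Pkh e * expR (ip g (phi e)) <= expR (nu ^+ 2 / 2 * ip g g).

Definition nu (i : nat) : R := bmax i * Num.sqrt logterm / (2 * i%:R).

(* finitely supported (weighted) distributions on X and MMD_k *)
Definition dirac (y : X) : seq (R * X) := [:: (1, y)].
Definition Pin : seq (R * X) := [seq ((n_in%:R)^-1, x j) | j <- iota 0 n_in].
Definition expect (mu : seq (R * X)) (g : H) : R :=
  \sum_(p <- mu) p.1 * ip g (Phi p.2).
Definition mmd (mu mu' : seq (R * X)) : R :=
  sup [set r | exists g : H, ip g g <= 1 /\ r = `|expect mu g - expect mu' g|].

End KernelHalving.

(* Main.v *)
Require Import Defs.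
From HB Require Import structures.
From mathcomp Require Import all_boot all_order all_algebra.
From mathcomp Require Import boolp classical_sets reals topology normedtype derive realfun.
From mathcomp.analysis Require Import sequences exp.
From mathcomp Require Import lra ring zify.
Import Order.TTheory GRing.Theory Num.Theory.
Import numFieldNormedType.Exports.
Local Open Scope classical_set_scope.
Local Open Scope ring_scope.
Section Hoeff.
Variable R : realType.

Lemma mono_deriv (f df : R -> R) : (forall x : R, is_derive x 1 f (df x)) ->
  (forall x, 0 <= df x) -> forall a b, a <= b -> f a <= f b.
Proof.
move=> hd hpos a b ab.
have cont : {within `[a, b], continuous f}.
  by apply: derivable_within_continuous => y _; case: (hd y).
have [c _ e] := MVT_segment ab (fun y _ => hd y) cont.
by rewrite -subr_ge0 e mulr_ge0 // subr_ge0.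
Qed.

Lemma max0_deriv (f df : R -> R) : (forall x : R, is_derive x 1 f (df x)) ->
  (forall x, 0 <= x -> df x <= 0) -> (forall x, x <= 0 -> 0 <= df x) ->
  forall c, f c <= f 0.
Proof.
move=> hd hr hl c.
have cont a b : {within `[a, b], continuous f}.
  by apply: derivable_within_continuous => y _; case: (hd y).
case: (leP 0 c) => c0.
  have [z zi e] := MVT_segment c0 (fun y _ => hd y) (cont _ _).
  rewrite -subr_le0 e; apply: mulr_le0_ge0; last by rewrite subr_ge0.
  by apply: hr; move: zi; rewrite in_itv /= => /andP[].
have c0' : c <= 0 by apply: ltW.
have [z zi e] := MVT_segment c0' (fun y _ => hd y) (cont _ _).
rewrite -subr_ge0 e; apply: mulr_ge0; last by rewrite subr_ge0.
by apply: hl; move: zi; rewrite in_itv /= => /andP[].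
Qed.

Section P.
Variable p : R.
Hypothesis p0 : 0 <= p.
Hypothesis p1 : p <= 1.


Let D (c : R) := p * expR (2 * c) + (1 - p).

Lemma D_gt0 c : 0 < D c.
Proof.
rewrite /D; case: (ltP p 1) => hp.
  by apply: ltr_wpDl; [rewrite mulr_ge0 // expR_ge0 | rewrite subr_gt0].
have -> : p = 1 by apply/eqP; rewrite eq_le p1 hp.
by rewrite mul1r subrr addr0 expR_gt0.
Qed.

Definition Nf (c : R) := c / 2 + p - p * expR (2 * c) * (p * expR (2 * c) + (1 - p))^-1.

Lemma Nf_deriv (x : R) : is_derive x 1 Nf ((p * expR (2 * x) - (1 - p)) ^+ 2 / (2 * D x ^+ 2)).
Proof.
have Dn : D x != 0 by rewrite gt_eqF // D_gt0.
have hV : is_derive x 1 (fun y => (p * expR (2 * y) + (1 - p))^-1)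
   (- (D x) ^- 2 *: (p * (expR (2 * x) * 2))).
  apply: is_deriveV => //.
  apply: is_derive_eq; rewrite /GRing.scale /=; ring.
rewrite /Nf; apply: is_derive_eq.
rewrite /GRing.scale /= -/(D x).
rewrite /D in Dn *.
field.
exact: Dn.
Qed.



Lemma Nf_sign (c : R) : (0 <= c -> 0 <= Nf c) /\ (c <= 0 -> Nf c <= 0).
Proof.
have N0 : Nf 0 = 0.
  rewrite /Nf mulr0 expR0 mulr1 mul0r add0r.
  have -> : p + (1 - p) = 1 by ring.
  by rewrite invr1 mulr1 subrr.
have mono := @mono_deriv Nf _ Nf_deriv.
have pos y : 0 <= (p * expR (2 * y) - (1 - p)) ^+ 2 / (2 * D y ^+ 2).
  by rewrite divr_ge0 ?sqr_ge0 // mulr_ge0 // sqr_ge0.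
split=> hc; rewrite -N0; exact: mono.
Qed.

Definition Kf (c : R) := p * expR (2 * (1 - p) * c - c ^+ 2 / 2)
   + (1 - p) * expR (- (2 * p * c) - c ^+ 2 / 2).

Lemma Kf_deriv (x : R) : is_derive x 1 Kf
  (- (2 * expR (- (2 * p * x) - x ^+ 2 / 2) * D x * Nf x)).
Proof.
have Dn : D x != 0 by rewrite gt_eqF // D_gt0.
rewrite /Kf; apply: is_derive_eq.
rewrite /GRing.scale /=.
have eA : expR (2 * (1 - p) * x - x ^+ 2 / 2) =
    expR (- (2 * p * x) - x ^+ 2 / 2) * expR (2 * x).
  by rewrite -expRD; congr expR; ring.
rewrite eA /Nf.
rewrite /D in Dn *.
field.
exact: Dn.
Qed.

Lemma Kf_le1 (c : R) : Kf c <= 1.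
Proof.
have K0 : Kf 0 = 1.
  rewrite /Kf !mulr0 expr0n /= mul0r oppr0 addr0 expR0; ring.
rewrite -[X in _ <= X]K0; apply: (max0_deriv _ _ Kf_deriv) => y hy.
  rewrite oppr_le0 mulr_ge0 // ?(proj1 (Nf_sign y) hy) //.
  by rewrite mulr_ge0 ?(ltW (D_gt0 _)) // mulr_ge0 // expR_ge0.
rewrite oppr_ge0 mulr_ge0_le0 // ?(proj2 (Nf_sign y) hy) //.
by rewrite mulr_ge0 ?(ltW (D_gt0 _)) // mulr_ge0 // expR_ge0.
Qed.
End P.

Lemma hoeffding (r c : R) : -1 <= r <= 1 ->
  (1 - r) / 2 * expR c + (1 - (1 - r) / 2) * expR (- c) <= expR (c ^+ 2 / 2 - r * c).
Proof.
move=> /andP[r1 r2].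
set p := (1 - r) / 2.
have p0 : 0 <= p by rewrite /p; lra.
have p1 : p <= 1 by rewrite /p; lra.
have := @Kf_le1 p p0 p1 c.
rewrite /Kf => h.
have -> : p * expR c + (1 - p) * expR (- c) =
   (p * expR (2 * (1 - p) * c - c ^+ 2 / 2)
   + (1 - p) * expR (- (2 * p * c) - c ^+ 2 / 2)) * expR (c ^+ 2 / 2 - r * c).
  have e1 : expR c = expR (2 * (1 - p) * c - c ^+ 2 / 2) * expR (c ^+ 2 / 2 - r * c).
    by rewrite -expRD; congr expR; rewrite /p; field.
  have e2 : expR (- c) = expR (- (2 * p * c) - c ^+ 2 / 2) * expR (c ^+ 2 / 2 - r * c).
    by rewrite -expRD; congr expR; rewrite /p; field.
  rewrite e1 e2; ring.
by rewrite -[X in _ <= X]mul1r ler_wpM2r // expR_ge0.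
Qed.
End Hoeff.

Section KHmain.
Variables (R : realType) (X : Type) (H : lmodType R) (ip : H -> H -> R)
  (Phi : X -> H) (k : X -> X -> R) (m : nat) (x : nat -> X) (delta : R).
Hypothesis hip : inner_product ip.
Hypothesis hk : forall y z, k y z = ip (Phi y) (Phi z).
Hypothesis hd : 0 < delta < 1.
Hypothesis hm : (0 < m)%N.

Lemma ipC u v : ip u v = ip v u.
Proof. by case: hip. Qed.
Lemma ipZDl a u v w : ip (a *: u + v) w = a * ip u w + ip v w.
Proof. by case: hip. Qed.
Lemma ip_ge0 u : 0 <= ip u u.
Proof. by case: hip. Qed.
Lemma ip_eq0 u : ip u u = 0 -> u = 0.
Proof. by case: hip => _ _ _; apply. Qed.
Lemma ip0l w : ip 0 w = 0.
Proof.
have := ipZDl 1 0 0 w; rewrite scale1r addr0 mul1r => h.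
by apply: (addrI (ip 0 w)); rewrite addr0 -h.
Qed.
Lemma ipDl u v w : ip (u + v) w = ip u w + ip v w.
Proof. by have := ipZDl 1 u v w; rewrite scale1r mul1r. Qed.
Lemma ipZl a u w : ip (a *: u) w = a * ip u w.
Proof. by have := ipZDl a u 0 w; rewrite addr0 ip0l addr0. Qed.
Lemma ipNl u w : ip (- u) w = - ip u w.
Proof. by rewrite -scaleN1r ipZl mulN1r. Qed.
Lemma ipBl u v w : ip (u - v) w = ip u w - ip v w.
Proof. by rewrite ipDl ipNl. Qed.
Lemma ip0r w : ip w 0 = 0.
Proof. by rewrite ipC ip0l. Qed.
Lemma ipDr u v w : ip w (u + v) = ip w u + ip w v.
Proof. by rewrite ipC ipDl !(ipC w). Qed.
Lemma ipZr a u w : ip w (a *: u) = a * ip w u.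
Proof. by rewrite ipC ipZl ipC. Qed.
Lemma ipNr u w : ip w (- u) = - ip w u.
Proof. by rewrite ipC ipNl ipC. Qed.
Lemma ipBr u v w : ip w (u - v) = ip w u - ip w v.
Proof. by rewrite ipDr ipNr. Qed.
Lemma ip_sumr (I : Type) (r : seq I) (P : pred I) (F : I -> H) w :
  ip w (\sum_(i <- r | P i) F i) = \sum_(i <- r | P i) ip w (F i).
Proof. by apply: (big_morph (ip w)); [move=> u v; rewrite ipDr | rewrite ip0r]. Qed.

Definition nrm u := Num.sqrt (ip u u).
Lemma nrm_ge0 u : 0 <= nrm u.
Proof. exact: sqrtr_ge0. Qed.
Lemma nrm2 u : nrm u ^+ 2 = ip u u.
Proof. by rewrite sqr_sqrtr // ip_ge0. Qed.
Lemma nrm_eq0 u : nrm u = 0 -> u = 0.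
Proof.
move=> /eqP; rewrite sqrtr_eq0 => h; apply: ip_eq0.
by apply/eqP; rewrite eq_le h ip_ge0.
Qed.

Lemma CS u v : ip u v ^+ 2 <= ip u u * ip v v.
Proof.
have [v0|vpos] := eqVneq (ip v v) 0.
  by rewrite (@ip_eq0 v v0) !ip0r expr0n /= mulr0.
have bpos : 0 < ip v v by rewrite lt0r vpos ip_ge0.
set a := ip u v; set b := ip v v.
set t := a / b.
have h := ip_ge0 (u - t *: v).
rewrite !(ipBl, ipBr, ipZl, ipZr) (ipC v u) -/a -/b in h.
have tb : t * b = a by rewrite /t divfK // gt_eqF.
have h2 : t * a <= ip u u.
  by move: h; rewrite tb; rewrite subrr subr0 subr_ge0.
have : t * a * b <= ip u u * b by rewrite ler_wpM2r // ltW.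
by rewrite mulrAC tb expr2.
Qed.

Lemma CSabs u v : `|ip u v| <= nrm u * nrm v.
Proof.
rewrite /nrm -sqrtrM ?ip_ge0 // -sqrtr_sqr ler_sqrt ?mulr_ge0 ?ip_ge0 //.
exact: CS.
Qed.

Lemma nrm_triangle u v : nrm (u + v) <= nrm u + nrm v.
Proof.
rewrite {1}/nrm -(ger0_norm (addr_ge0 (nrm_ge0 u) (nrm_ge0 v))) -sqrtr_sqr.
rewrite ler_sqrt ?sqr_ge0 // !(ipDl, ipDr) sqrrD !nrm2 (ipC v u).
have := CSabs u v; have := ler_norm (ip u v) => h1 h2.
have : ip u v <= nrm u * nrm v by apply: le_trans h1 h2.
move=> h3; rewrite -mulr_natr; lra.
Qed.

Lemma nrmN u : nrm (- u) = nrm u.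
Proof. by rewrite /nrm ipNl ipNr opprK. Qed.

Lemma nrmB3 u v w : nrm (u - v) <= nrm (u - w) + nrm (v - w).
Proof.
have -> : u - v = (u - w) + - (v - w) by rewrite opprB addrA subrK.
by apply: le_trans (nrm_triangle _ _) _; rewrite nrmN.
Qed.

Lemma nrmB2 u v : nrm (u - v) <= nrm u + nrm v.
Proof. by apply: le_trans (nrm_triangle _ _) _; rewrite nrmN. Qed.

Lemma mmd_nrm (mu mu' : seq (R * X)) f :
  (forall g, expect ip Phi mu g - expect ip Phi mu' g = ip g f) ->
  mmd ip Phi mu mu' = nrm f.
Proof.
move=> hD; rewrite /mmd.
set E := [set r | _].
have ub : ubound E (nrm f).
  move=> r [g [hg ->]]; rewrite hD.
  apply: le_trans (CSabs g f) _.
  rewrite -[X in _ <= X]mul1r ler_wpM2r ?nrm_ge0 //.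
  by rewrite /nrm -sqrtr1 ler_sqrt.
have E0 : E `|expect ip Phi mu 0 - expect ip Phi mu' 0|.
  by exists 0; rewrite ip0l.
apply/eqP; rewrite eq_le; apply/andP; split.
  by apply: ge_sup => //; exists (`|expect ip Phi mu 0 - expect ip Phi mu' 0|).
have hub : has_ubound E by exists (nrm f).
have [f0|fpos] := eqVneq (nrm f) 0.
  rewrite f0; apply: le_trans (ub_le_sup hub E0); exact: normr_ge0.
have nf : 0 < nrm f by rewrite lt0r fpos nrm_ge0.
have Eg : E (nrm f).
  exists ((nrm f)^-1 *: f); split.
    by rewrite ipZl ipZr -nrm2 mulrA -expr2 exprVn mulVf // expf_neq0.
  rewrite hD ipZl -nrm2 expr2 mulrA mulVf // mul1r ger0_norm //.
rewrite nrm_ge0 //.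
exact: ub_le_sup.
Qed.

Lemma expect_dirac y g : expect ip Phi (dirac R y) g = ip g (Phi y).
Proof. by rewrite /expect /dirac big_cons big_nil /= mul1r addr0. Qed.

Definition mean := ((n_in m)%:R)^-1 *: \sum_(j <- iota 0 (n_in m)) Phi (x j).

Lemma expect_Pin g : expect ip Phi (Pin R m x) g = ip g mean.
Proof.
rewrite /expect /Pin big_map /mean ipZr ip_sumr mulr_sumr.
by apply: eq_bigr.
Qed.

Lemma mmd_dirac y z : mmd ip Phi (dirac R y) (dirac R z) = nrm (Phi y - Phi z).
Proof. by apply: mmd_nrm => g; rewrite !expect_dirac ipBr. Qed.

Lemma mmd_Pin y : mmd ip Phi (dirac R y) (Pin R m x) = nrm (Phi y - mean).
Proof. by apply: mmd_nrm => g; rewrite expect_dirac expect_Pin ipBr. Qed.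

Lemma bb_nrm j : bb k x j = nrm (fv Phi x j).
Proof.
rewrite /bb /nrm /fv; congr Num.sqrt.
rewrite !hk !(ipBl, ipBr) (ipC (Phi (x (2 * j).+1))). ring.
Qed.


Local Notation signs := (signs m).
Local Notation ps := (@pswap R X H ip Phi k m x delta).
Local Notation al := (@alpha R X H ip Phi m x).
Local Notation Pk := (@Pkh R X H ip Phi k m x delta).

Definition q (e : signs) (j : 'I_m) : R := if e j then ps e j else 1 - ps e j.
Definition W (i : nat) (e : signs) : R :=
  \prod_(j < m) (if (j < i)%N then q e j else 2^-1).
Definition agree i (e e' : signs) := forall j : 'I_m, (j < i)%N -> e j = e' j.
Definition dep (i : nat) (F : signs -> R) :=
  forall e e' : signs, agree i e e' -> F e = F e'.

Lemma agree_le i i' e e' : (i <= i')%N -> agree i' e e' -> agree i e e'.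
Proof. by move=> h a j hj; apply: a; apply: leq_trans h. Qed.
Arguments agree_le {i i' e e'}.

Lemma psi_dep i e e' : agree i e e' -> psi Phi x e i = psi Phi x e' i.
Proof. by move=> h; apply: eq_bigr => j hj; rewrite h. Qed.
Arguments psi_dep {i e e'}.
Lemma alpha_dep i e e' : agree i e e' -> al e i = al e' i.
Proof. by move=> h; rewrite /alpha (psi_dep h). Qed.
Arguments alpha_dep {i e e'}.
Lemma ps_dep i e e' : agree i e e' -> ps e i = ps e' i.
Proof. by move=> h; rewrite /pswap (alpha_dep h). Qed.
Arguments ps_dep {i e e'}.

Lemma ps_01 e j : 0 <= ps e j <= 1.
Proof.
rewrite /pswap le_min ler01 /= ge_min lexx /= andbT.
by rewrite mulr_ge0 // ?invr_ge0 ?ler0n // le_max lexx.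
Qed.

Lemma q_ge0 e j : 0 <= q e j.
Proof. by have /andP[h1 h2] := ps_01 e j; rewrite /q; case: (e j) => //; rewrite subr_ge0. Qed.

Lemma W_ge0 i e : 0 <= W i e.
Proof. by apply: prodr_ge0 => j _; case: ifP => _; [apply: q_ge0 | rewrite invr_ge0 ler0n]. Qed.

Lemma W_m e : W m e = Pk e.
Proof. by apply: eq_bigr => j _; rewrite ltn_ord. Qed.

Lemma q_dep (j : 'I_m) e e' : agree j.+1 e e' -> q e j = q e' j.
Proof.
move=> h; rewrite /q (h j (ltnSn _)) (@ps_dep j e e') //.
exact: agree_le (leqnSn _) h.
Qed.

Lemma W_dep i : dep i (W i).
Proof.
move=> e e' h; apply: eq_bigr => j _; case: ifP => // hj.
by apply: q_dep; apply: agree_le h.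
Qed.

Definition setb (e : signs) (i : nat) (b : bool) : signs :=
  [ffun j : 'I_m => if (j == i :> nat) then b else e j].
Definition flipb (e : signs) (i : nat) : signs :=
  [ffun j : 'I_m => if (j == i :> nat) then ~~ e j else e j].

Lemma agree_setb i e b : agree i e (setb e i b).
Proof. by move=> j hj; rewrite ffunE (ltn_eqF hj). Qed.
Lemma agree_flipb i e : agree i e (flipb e i).
Proof. by move=> j hj; rewrite ffunE (ltn_eqF hj). Qed.
Lemma agree_sym i e e' : agree i e e' -> agree i e' e.
Proof. by move=> h j hj; rewrite h. Qed.

Lemma flipbK i : involutive (flipb ^~ i).
Proof. by move=> e; apply/ffunP => j; rewrite !ffunE; case: eqP => // _; rewrite negbK. Qed.

Lemma step i F : (i < m)%N ->
  \sum_e W i.+1 e * F e =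
  \sum_e W i e * (ps e i * F (setb e i true) + (1 - ps e i) * F (setb e i false)).
Proof.
move=> hi; set io := Ordinal hi.
have Wsplit e : W i.+1 e = 2 * q e io * W i e.
  rewrite /W (bigD1 io) //= (bigD1 io (P := predT)) //= ltnSn ltnn.
  have -> : \prod_(j < m | j != io) (if (j < i.+1)%N then q e j else 2^-1) =
            \prod_(j < m | j != io) (if (j < i)%N then q e j else 2^-1).
    apply: eq_bigr => j hj; rewrite ltnS leq_eqVlt.
    have -> : (nat_of_ord j == i) = false.
      by apply/negbTE; apply: contra hj => /eqP hji; apply/eqP/val_inj.
    by [].
  by field.
have Winv e : W i (flipb e i) = W i e by apply/esym/W_dep/agree_flipb.
have pinv e : ps (flipb e i) i = ps e i by apply/esym/ps_dep/agree_flipb.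
under eq_bigr do rewrite Wsplit.
have -> : \sum_e 2 * q e io * W i e * F e =
          \sum_e (q e io * W i e * F e + q (flipb e i) io * W i (flipb e i) * F (flipb e i)).
  have hre : \sum_e q (flipb e i) io * W i (flipb e i) * F (flipb e i) =
             \sum_e q e io * W i e * F e.
    by rewrite [RHS](reindex_inj (can_inj (flipbK i))).
  rewrite big_split /= hre -big_split /=.
  by apply: eq_bigr => e _; ring.
apply: eq_bigr => e _; rewrite Winv /q /=.
have fio : flipb e i io = ~~ e io by rewrite ffunE eqxx.
rewrite fio pinv.
have st b : e io = b -> setb e i b = e.
  move=> hb; apply/ffunP => j; rewrite ffunE; case: eqP => // hj.
  by have -> : j = io by apply: val_inj.
have sf b : e io = ~~ b -> setb e i b = flipb e i.
  move=> hb; apply/ffunP => j; rewrite !ffunE; case: eqP => // hj.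
  have -> : j = io by apply: val_inj.
  by rewrite hb negbK.
case he : (e io); rewrite /=.
  by rewrite (st true he) (sf false he); ring.
by rewrite (st false he) (sf true he); ring.
Qed.


Local Notation a_ := (aa k m x delta).
Local Notation f_ := (fv Phi x).
Local Notation b_ := (bb k x).
Local Notation B_ := (bmax k x).
Local Notation L := (logterm m delta).
Local Notation psi_ := (@psi R X H Phi m x).

Lemma marg i d F : dep i F -> (i + d <= m)%N ->
  \sum_e W (i + d) e * F e = \sum_e W i e * F e.
Proof.
move=> hF; elim: d => [|d IH] hid; first by rewrite addn0.
rewrite addnS step; last by rewrite -addnS.
rewrite -IH; last by apply: ltnW; rewrite -addnS.
apply: eq_bigr => e _.
have e1 b : F (setb e (i + d) b) = F e.
  by apply/esym/hF/(agree_le (leq_addr d i))/agree_setb.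
by rewrite !e1; ring.
Qed.

Lemma marg_le i j F : dep i F -> (i <= j <= m)%N ->
  \sum_e W j e * F e = \sum_e W i e * F e.
Proof. by move=> hF /andP[ij jm]; rewrite -(subnKC ij) marg // subnKC. Qed.

Lemma sumW0 : \sum_e W 0 e = 1.
Proof.
rewrite (eq_bigr (fun=> (2^-1) ^+ m)); last first.
  by move=> e _; rewrite /W (eq_bigr (fun=> 2^-1)) ?prodr_const ?card_ord // => j _; rewrite ltn0.
rewrite sumr_const card_ffun card_bool card_ord -[_ *+ _]mulr_natr natrX -exprMn mulVf ?expr1n //; rewrite gt_eqF //; lra.

Qed.

Lemma sumW i : (i <= m)%N -> \sum_e W i e = 1.
Proof.
move=> im.
have e1 j : \sum_e W j e = \sum_e W j e * (fun=> 1) e.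
  by apply: eq_bigr => e _; rewrite mulr1.
by rewrite e1 (@marg_le 0 i) ?leq0n ?im // -e1 sumW0.
Qed.

Lemma sumPkh : \sum_e Pk e = 1.
Proof. by rewrite -(@sumW m (leqnn m)); apply: eq_bigr => e _; rewrite W_m. Qed.

Definition Ev (i : nat) (e : signs) : bool :=
  [forall j : 'I_m, (j < i)%N ==> (`|al e j| <= a_ j)].

Lemma Ev_dep i e e' : agree i e e' -> Ev i e = Ev i e'.
Proof.
move=> h; apply: eq_forallb => j; case hj: (j < i)%N => //=.
by rewrite (@alpha_dep j e e') //; apply: agree_le h; apply: ltnW.
Qed.
Arguments Ev_dep {i e e'}.

Lemma Ev0 e : Ev 0 e.
Proof. by apply/forallP => j; rewrite ltn0. Qed.

Lemma EvS i e : (i < m)%N -> Ev i.+1 e = Ev i e && (`|al e i| <= a_ i).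
Proof.
move=> hi; apply/idP/idP.
  move/forallP => h; apply/andP; split.
    apply/forallP => j; apply/implyP => hj.
    by apply: (implyP (h j)); apply: leq_trans hj _.
  exact: (implyP (h (Ordinal hi)) (ltnSn i)).
case/andP => /forallP h1 h2; apply/forallP => j; apply/implyP.
rewrite ltnS leq_eqVlt => /orP[/eqP hj | hj]; first by rewrite hj.
exact: (implyP (h1 j) hj).
Qed.

Lemma Ev_le i j e : (i <= j)%N -> Ev j e -> Ev i e.
Proof.
move=> ij /forallP h; apply/forallP => l; apply/implyP => hl.
by apply: (implyP (h l)); apply: leq_trans hl ij.
Qed.

Definition sgn (e : signs) (j : 'I_m) : H := if e j then f_ j else - f_ j.

Lemma psiS e i (hi : (i < m)%N) : psi_ e i.+1 = psi_ e i + sgn e (Ordinal hi).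
Proof.
rewrite /psi (bigD1 (Ordinal hi)) //= addrC; congr (_ + _).
apply: eq_bigl => j /=; rewrite ltnS leq_eqVlt.
case: (eqVneq j (Ordinal hi)) => [->|hne] /=; first by rewrite eqxx ltnn.
have -> : (nat_of_ord j == i) = false.
  by apply/negbTE; apply: contra hne => /eqP h; apply/eqP/val_inj.
by rewrite andbT.
Qed.

Lemma bmax_ge0 i : 0 <= B_ i.
Proof.
rewrite /bmax; apply: (big_ind (fun v => 0 <= v)) => //.
  by move=> u v hu hv; rewrite le_max hu.
by move=> j _; exact: sqrtr_ge0.
Qed.

Lemma bb_ge0 i : 0 <= b_ i.
Proof. exact: sqrtr_ge0. Qed.

Lemma bb_le i : b_ i <= B_ i.+1.
Proof. exact: (Order.TotalTheory.le_bigmax 0 (fun j : 'I_i.+1 => b_ j) ord_max). Qed.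

Lemma bmax_mono i j : (i <= j)%N -> B_ i <= B_ j.
Proof. move=> ij; rewrite /bmax; exact: (@Order.TotalTheory.le_bigmax_ord _ _ 0 i j (fun=> true) b_ ij). Qed.
Arguments bmax_mono {i j}.


Lemma expR54 : expR (5 / 4 : R) <= 4.
Proof.
have -> : (5 / 4 : R) = 8%:R * (5 / 32) by rewrite -[8%:R]/(8 : R); field.
rewrite expRM_natl.
set y := expR (5 / 32 : R).
have y0 : 0 <= y by apply: expR_ge0.
have z1 : 27 / 32 <= expR (- (5 / 32) : R).
  by apply: le_trans (expR_ge1Dx _); lra.
have yz : y * expR (- (5 / 32)) = 1 by rewrite /y -expRD subrr expR0.
have y1 : y <= 32 / 27.
  have z0 : 0 < expR (- (5 / 32) : R) by apply: expR_gt0.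
  nra.
have y2 : y ^+ 2 <= 141 / 100 by nra.
have y4 : (y ^+ 2) ^+ 2 <= 2.
  have : 0 <= y ^+ 2 by apply: sqr_ge0.
  nra.
have y8 : ((y ^+ 2) ^+ 2) ^+ 2 <= 4.
  have : 0 <= (y ^+ 2) ^+ 2 by apply: sqr_ge0.
  nra.
by rewrite -!exprM in y8.
Qed.

Lemma expRL : expR L = 2 * (2 * m)%:R / delta.
Proof.
rewrite /logterm /n_in lnK // posrE.
case/andP: hd => d0 _.
by rewrite divr_gt0 // mulr_gt0 // ltr0n muln_gt0 hm.
Qed.

Lemma L_ge : 5 / 4 <= L.
Proof.
rewrite -ler_expR expRL; apply: le_trans expR54 _.
case/andP: hd => d0 d1.
rewrite ler_pdivlMr // natrM.
have : (1 : R) <= m%:R by rewrite ler1n.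
nra.
Qed.

Lemma Lpos : 0 < L.
Proof. by apply: lt_le_trans L_ge; lra. Qed.

Lemma expNL : expR (- L) = delta / (4 * m%:R).
Proof.
rewrite expRN expRL natrM.
case/andP: hd => d0 _.
have mn : (m%:R : R) != 0 by rewrite pnatr_eq0 -lt0n.
field; rewrite mn gt_eqF //.
Qed.

Definition hL := 2^-1 + L.
Definition c0 := hL ^+ 2 / (2 * L).
Definition sv i := B_ i ^+ 2 * c0.

Lemma c0_ge0 : 0 <= c0.
Proof. by rewrite /c0 divr_ge0 ?sqr_ge0 // mulr_ge0 // ltW // Lpos. Qed.

Lemma c0_le : c0 <= L.
Proof.
have L1 := L_ge; have L0 := Lpos.
rewrite /c0 /hL ler_pdivrMr; last by rewrite mulr_gt0.
nra.
Qed.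

Lemma sv_mono i j : (i <= j)%N -> sv i <= sv j.
Proof.
move=> ij; rewrite /sv ler_wpM2r ?c0_ge0 //.
have := bmax_mono ij; have := bmax_ge0 i => h1 h2.
by rewrite ler_pXn2r // ?nnegrE // (le_trans h1 h2).
Qed.

Lemma aa_ge0 i : 0 <= a_ i.
Proof.
rewrite /aa mulr_ge0 // ?mulr_ge0 ?bb_ge0 ?bmax_ge0 //.
by have := Lpos; rewrite /logterm; lra.
Qed.

Lemma ps_formula e i : `|al e i| <= a_ i ->
  ps e i = (1 - al e i / a_ i) / 2 /\ -1 <= al e i / a_ i <= 1.
Proof.
move=> ha.
have hr : -1 <= al e i / a_ i <= 1.
  have [a0|apos] := eqVneq (a_ i) 0.
    by rewrite a0 invr0 mulr0; lra.
  have agt : 0 < a_ i by rewrite lt0r apos aa_ge0.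
  rewrite -ler_norml normrM normfV (ger0_norm (aa_ge0 i)) ler_pdivrMr //.
  by rewrite mul1r.
split=> //.
rewrite /pswap (@max_r _ _ 0); last by lra.
rewrite min_r; first by rewrite mulrC.
lra.
Qed.

Lemma alg_step (b B B' Lr G c : R) : 0 < Lr -> 0 <= b <= B -> 0 <= B' <= B ->
  0 <= G -> (b = 0 -> c = 0) ->
  let h := 2^-1 + Lr in let cc := h ^+ 2 / (2 * Lr) in let a := b * B * h in
  0 <= G - 2 * (c / a) * c + (c / a) ^+ 2 * b ^+ 2 ->
  B' ^+ 2 * cc / 2 * (G - 2 * (c / a) * c + (c / a) ^+ 2 * b ^+ 2) + c ^+ 2 / 2
  <= B ^+ 2 * cc / 2 * G.
Proof.
move=> L0 /andP[b0 bB] /andP[B'0 B'B] G0 hc h cc a G'0.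
have h0 : 0 < h by rewrite /h; lra.
have cc0 : 0 <= cc by rewrite /cc divr_ge0 ?sqr_ge0 // mulr_ge0 // ltW.
have BB : B' ^+ 2 <= B ^+ 2 by rewrite ler_pXn2r // ?nnegrE // (le_trans B'0 B'B).
have [b00|bpos] := eqVneq b 0.
  rewrite (hc b00) b00.
  have -> : G - 2 * (0 / a) * 0 + (0 / a) ^+ 2 * 0 ^+ 2 = G by ring.
  rewrite expr0n /= mul0r addr0.
  by rewrite ler_wpM2r // ler_wpM2r //; [lra | rewrite ler_wpM2r].
have bgt : 0 < b by rewrite lt0r bpos.
have Bgt : 0 < B by apply: lt_le_trans bB.
have agt : 0 < a by rewrite /a !mulr_gt0.
apply: le_trans (_ : B ^+ 2 * cc / 2 * (G - 2 * (c / a) * c + (c / a) ^+ 2 * b ^+ 2) + c ^+ 2 / 2 <= _).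
  by rewrite lerD2r ler_wpM2r // ler_wpM2r //; [lra | rewrite ler_wpM2r].
rewrite -subr_le0.
have -> : B ^+ 2 * cc / 2 * (G - 2 * (c / a) * c + (c / a) ^+ 2 * b ^+ 2) + c ^+ 2 / 2
   - B ^+ 2 * cc / 2 * G = - (c ^+ 2 * B ^+ 2 * h ^+ 3 * b * (B - b) / (2 * a ^+ 2 * Lr)).
  rewrite /cc /a /h; field.
  rewrite (gt_eqF L0) (gt_eqF Bgt) (gt_eqF bgt) /= andbT gt_eqF //; lra.
have p1 : 0 <= c ^+ 2 * B ^+ 2 * h ^+ 3 * b * (B - b).
  apply: mulr_ge0; last by rewrite subr_ge0.
  apply: mulr_ge0 => //; apply: mulr_ge0; last by apply: exprn_ge0; apply: ltW.
  by apply: mulr_ge0; apply: sqr_ge0.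
have p2 : 0 < 2 * a ^+ 2 * Lr by rewrite !mulr_gt0 ?exprn_gt0 //; lra.
by rewrite -oppr_ge0 opprK divr_ge0 // ltW.
Qed.

Lemma F_setb i e b g (hi : (i < m)%N) :
  (Ev i.+1 (setb e i b))%:R * expR (ip g (psi_ (setb e i b) i.+1)) =
  (Ev i e && (`|al e i| <= a_ i))%:R *
     expR (ip g (psi_ e i) + (if b then ip g (f_ i) else - ip g (f_ i))).
Proof.
have ag := agree_setb i e b.
rewrite EvS // -(Ev_dep ag) -(alpha_dep ag) (psiS _ _ hi) -(psi_dep ag) ipDr.
by rewrite /sgn ffunE eqxx /=; clear ag; case: b; rewrite ?ipNr.
Qed.

Lemma K_bound i e g (hi : (i < m)%N) :
  ps e i * ((Ev i.+1 (setb e i true))%:R * expR (ip g (psi_ (setb e i true) i.+1))) +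
  (1 - ps e i) * ((Ev i.+1 (setb e i false))%:R * expR (ip g (psi_ (setb e i false) i.+1)))
  <= (Ev i e)%:R * expR (ip (g - (ip g (f_ i) / a_ i) *: f_ i) (psi_ e i))
     * expR (ip g (f_ i) ^+ 2 / 2).
Proof.
rewrite !F_setb //=.
set c := ip g (f_ i).
have /andP[p0 p1] := ps_01 e i.
case hb : (Ev i e && (`|al e i| <= a_ i)); last first.
  rewrite /= !mul0r !mulr0 addr0.
  by apply: mulr_ge0; [apply: mulr_ge0; [apply: ler0n | apply: expR_ge0] | apply: expR_ge0].
case/andP: hb => hE ha; rewrite hE !mul1r.
have [pf hr] := ps_formula _ _ ha.
rewrite pf !expRD.
set Y := ip g (psi_ e i).
have eg : ip (g - (c / a_ i) *: f_ i) (psi_ e i) = Y - al e i / a_ i * c.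
  by rewrite ipBl ipZl /alpha (ipC (f_ i)) -/Y; ring.
rewrite eg.
have -> : expR (Y - al e i / a_ i * c) * expR (c ^+ 2 / 2) =
          expR Y * expR (c ^+ 2 / 2 - al e i / a_ i * c).
  by rewrite -!expRD; congr expR; ring.
have hh := @hoeffding R (al e i / a_ i) c hr.
have -> : (1 - al e i / a_ i) / 2 * (expR Y * expR c) +
          (1 - (1 - al e i / a_ i) / 2) * (expR Y * expR (- c)) =
          expR Y * ((1 - al e i / a_ i) / 2 * expR c +
          (1 - (1 - al e i / a_ i) / 2) * expR (- c)) by ring.
by rewrite ler_wpM2l // expR_ge0.
Qed.

Lemma ip_expand (g f : H) (t : R) :
  ip (g - t *: f) (g - t *: f) = ip g g - 2 * t * ip g f + t ^+ 2 * ip f f.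
Proof. rewrite !(ipBl, ipBr, ipZl, ipZr) (ipC f g); ring. Qed.

Lemma claim i : (i <= m)%N -> forall g,
  \sum_e W i e * ((Ev i e)%:R * expR (ip g (psi_ e i))) <= expR (sv i / 2 * ip g g).
Proof.
elim: i => [_ g|i IH hi g].
  have -> : sv 0 = 0 by rewrite /sv /bmax big_ord0 expr0n /= mul0r.
  rewrite !mul0r expR0.
  have p0 e : psi_ e 0 = 0 by rewrite /psi big_pred0 // => j; exact: ltn0.
  under eq_bigr => e _ do rewrite Ev0 p0 ip0r expR0 !mulr1.
  by rewrite sumW0.
rewrite (step _ _ hi).
set c := ip g (f_ i); set g' := g - (c / a_ i) *: f_ i.
apply: le_trans (_ : \sum_e W i e * ((Ev i e)%:R * expR (ip g' (psi_ e i))) * expR (c ^+ 2 / 2) <= _).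
  apply: ler_sum => e _; rewrite -mulrA ler_wpM2l ?W_ge0 //.
  exact: K_bound.
rewrite -mulr_suml; apply: le_trans (ler_wpM2r (expR_ge0 _) (IH (ltnW hi) g')) _.
rewrite -expRD ler_expR.
have eG : ip g' g' = ip g g - 2 * (c / a_ i) * c + (c / a_ i) ^+ 2 * b_ i ^+ 2.
  by rewrite /g' ip_expand -/c bb_nrm nrm2; ring.
rewrite eG /sv /c0 /hL.
apply: (@alg_step (b_ i) (B_ i.+1) (B_ i) L (ip g g) c Lpos).
- by rewrite bb_ge0 bb_le.
- by rewrite bmax_ge0 bmax_mono.
- exact: ip_ge0.
- move=> b0; have f0 : f_ i = 0 by apply: nrm_eq0; rewrite -bb_nrm.
  by rewrite /c f0 ip0r.
- by rewrite -eG ip_ge0.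
Qed.

Lemma tail i : (i < m)%N ->
  \sum_e Pk e * (Ev i e && (a_ i < `|al e i|))%:R <= 2 * expR (- L).
Proof.
move=> hi.
have dF : dep i (fun e => (Ev i e && (a_ i < `|al e i|))%:R).
  by move=> e e' h; rewrite (Ev_dep h) (alpha_dep h).
rewrite (eq_bigr (fun e => W m e * (Ev i e && (a_ i < `|al e i|))%:R)); last first.
  by move=> e _; rewrite W_m.
rewrite (@marg_le i m _ dF); last by rewrite (ltnW hi) leqnn.
have e2 : 0 <= 2 * expR (- L) by rewrite mulr_ge0 ?expR_ge0 // ler0n.
have [b0|bne] := eqVneq (b_ i) 0.
  have f0 : f_ i = 0 by apply: nrm_eq0; rewrite -bb_nrm.
  rewrite big1 // => e _.
  by rewrite /alpha f0 ip0r /aa b0 !mul0r normr0 ltxx andbF mulr0.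
have bgt : 0 < b_ i by rewrite lt0r bne bb_ge0.
have Bgt : 0 < B_ i.+1 by apply: lt_le_trans (bb_le i).
have L0 := Lpos.
have hgt : 0 < hL by rewrite /hL; lra.
have c0gt : 0 < c0 by rewrite /c0 divr_gt0 ?exprn_gt0 // mulr_gt0.
have sgt : 0 < sv i.+1 by rewrite /sv mulr_gt0 ?exprn_gt0.
have agt : 0 < a_ i by rewrite /aa !mulr_gt0 //; rewrite -/hL.
set t := a_ i / (sv i.+1 * b_ i ^+ 2).
have t0 : 0 <= t.
  by apply: divr_ge0; [exact: ltW | apply: mulr_ge0; [exact: ltW | exact: sqr_ge0]].
have ipt e (u : R) : ip (u *: f_ i) (psi_ e i) = u * al e i.
  by rewrite ipZl /alpha ipC.
apply: le_trans (_ : \sum_e W i e * (expR (- (t * a_ i)) *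
     ((Ev i e)%:R * expR (ip (t *: f_ i) (psi_ e i)) +
      (Ev i e)%:R * expR (ip ((- t) *: f_ i) (psi_ e i)))) <= _).
  apply: ler_sum => e _; rewrite ler_wpM2l ?W_ge0 //.
  case hE : (Ev i e) => /=; last first.
    by rewrite !mul0r addr0 mulr0.
  rewrite !mul1r !ipt.
  case hlt : (a_ i < `|al e i|) => /=; last first.
    by rewrite mulr_ge0 ?expR_ge0 // addr_ge0 ?expR_ge0.
  rewrite mulrDr -!expRD.
  case: (lerP 0 (al e i)) => hal.
    move: hlt; rewrite ger0_norm // => hlt.
    have : 0 <= - (t * a_ i) + t * al e i.
      by rewrite addrC subr_ge0 ler_wpM2l // ltW.
    move=> hp; apply: le_trans (_ : 1 <= expR (- (t * a_ i) + t * al e i)) _.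
      by apply: le_trans (expR_ge1Dx _); lra.
    by rewrite lerDl expR_ge0.
  move: hlt; rewrite ltr0_norm // => hlt.
  have : 0 <= - (t * a_ i) + - t * al e i.
    have -> : - (t * a_ i) + - t * al e i = t * (- al e i - a_ i) by ring.
    by rewrite mulr_ge0 // subr_ge0 ltW.
  move=> hp; apply: le_trans (_ : 1 <= expR (- (t * a_ i) + - t * al e i)) _.
    by apply: le_trans (expR_ge1Dx _); lra.
  by rewrite lerDr expR_ge0.
under eq_bigr => e _ do rewrite mulrCA mulrDr.
rewrite -mulr_sumr big_split /=.
have ipf (u : R) : ip (u *: f_ i) (u *: f_ i) = u ^+ 2 * b_ i ^+ 2.
  by rewrite ipZl ipZr bb_nrm nrm2 expr2; ring.
have c1 := @claim i (ltnW hi) (t *: f_ i).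
have c2 := @claim i (ltnW hi) ((- t) *: f_ i).
rewrite !ipf sqrrN in c1 c2.
apply: le_trans (ler_wpM2l (expR_ge0 _) (lerD c1 c2)) _.
have -> : expR (- (t * a_ i)) * (expR (sv i / 2 * (t ^+ 2 * b_ i ^+ 2)) +
   expR (sv i / 2 * (t ^+ 2 * b_ i ^+ 2))) =
   2 * expR (- (t * a_ i) + sv i / 2 * (t ^+ 2 * b_ i ^+ 2)) by rewrite expRD; ring.
apply: ler_wpM2l; first lra.
rewrite ler_expR.
apply: le_trans (_ : - (t * a_ i) + sv i.+1 / 2 * (t ^+ 2 * b_ i ^+ 2) <= _).
  rewrite lerD2l; apply: ler_wpM2r; first by rewrite mulr_ge0 ?sqr_ge0.
  by apply: ler_wpM2r; [lra | apply: sv_mono].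
have -> : - (t * a_ i) + sv i.+1 / 2 * (t ^+ 2 * b_ i ^+ 2) = - L.
  rewrite /t /sv /c0 /aa -/hL /hL; field.
  by rewrite (gt_eqF L0) (gt_eqF Bgt) (gt_eqF bgt) /= andbT gt_eqF //; lra.
by [].
Qed.

Lemma Pk_ge0 e : 0 <= Pk e.
Proof. by rewrite -W_m W_ge0. Qed.

Lemma main_res : exists E : {set signs},
    1 - delta / 2 <= prob ip Phi k x delta E /\
    forall i : nat, (1 <= i <= m)%N ->
      [/\ subgaussian_on ip Phi k x delta
            (fun e => (2 * i%:R)^-1 *: psi Phi x e i)
            (nu k m x delta i) E,
          nu k m x delta i =
            Num.sqrt (logterm m delta) / (2 * i%:R) *
            \big[Num.max/0]_(j < i) mmd ip Phi (dirac R (x (2 * j)%N))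
                                             (dirac R (x (2 * j)%N.+1)) &
          nu k m x delta i <=
            Num.sqrt (logterm m delta) / (2 * i%:R) *
            (2 * Num.min (\big[Num.max/0]_(j < (2 * m)%N) Num.sqrt (k (x j) (x j)))
                         (\big[Num.max/0]_(j < (2 * m)%N)
                             mmd ip Phi (dirac R (x j)) (Pin R m x)))].
Proof.
exists [set e | Ev m e]%SET; split.
  have hsum : prob ip Phi k x delta [set e | Ev m e]%SET = \sum_e Pk e * (Ev m e)%:R.
    rewrite /prob big_mkcond /=; apply: eq_bigr => e _; rewrite inE.
    by case: (Ev m e); rewrite /= ?mulr1 ?mulr0.
  have tele n : (n <= m)%N -> forall e,
      (1 - (Ev n e)%:R : R) = \sum_(i < n) (Ev i e && (a_ i < `|al e i|))%:R.
    elim: n => [_ e|n IH hn e]; first by rewrite Ev0 big_ord0 subrr.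
    rewrite big_ord_recr /= -IH ?(ltnW hn) // (EvS _ _ hn) ltNge.
    by case: (Ev n e); case: (`|al e n| <= a_ n); rewrite /= ?mulr1n ?mulr0n; lra.
  have eq1 : 1 - prob ip Phi k x delta [set e | Ev m e]%SET =
      \sum_(i < m) \sum_e Pk e * (Ev i e && (a_ i < `|al e i|))%:R.
    rewrite hsum -{1}sumPkh -sumrB exchange_big /=; apply: eq_bigr => e _.
    by rewrite -mulr_sumr -(tele m (leqnn m) e) mulrBr mulr1.
  have le1 : \sum_(i < m) \sum_e Pk e * (Ev i e && (a_ i < `|al e i|))%:R
      <= \sum_(i < m) (2 * expR (- L)).
    by apply: ler_sum => i _; apply: tail.
  rewrite sumr_const card_ord expNL in le1.
  have mn : (m%:R : R) != 0 by rewrite pnatr_eq0 -lt0n.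
  have e3 : (2 * (delta / (4 * m%:R))) *+ m = delta / 2.
    by rewrite -mulr_natr; field.
  rewrite e3 -eq1 in le1.
  lra.
move=> i /andP[i1 im]; split.
- rewrite /subgaussian_on => g.
  set a := (2 * i%:R)^-1.
  apply: le_trans (_ : \sum_e Pk e * ((Ev i e)%:R * expR (ip (a *: g) (psi_ e i))) <= _).
    rewrite big_mkcond /=; apply: ler_sum => e _; rewrite inE.
    case hm' : (Ev m e).
      by rewrite (@Ev_le i m e im hm') /= mul1r ipZr ipZl.
    by rewrite mulr_ge0 ?Pk_ge0 // mulr_ge0 ?expR_ge0 // ler0n.
  rewrite (eq_bigr (fun e => W m e * ((Ev i e)%:R * expR (ip (a *: g) (psi_ e i)))));
    last by move=> e _; rewrite W_m.
  rewrite (@marg_le i m); last first.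
  + by rewrite im leqnn.
  + by move=> e e' h; rewrite (Ev_dep h) (psi_dep h).
  apply: le_trans (@claim i im (a *: g)) _.
  rewrite ler_expR ipZl ipZr.
  have hnu : nu k m x delta i ^+ 2 = B_ i ^+ 2 * L * a ^+ 2.
    rewrite /nu /a !exprMn sqr_sqrtr; first by rewrite exprVn; ring.
    exact: ltW Lpos.
  rewrite hnu /sv.
  have G0 := ip_ge0 g.
  have -> : B_ i ^+ 2 * c0 / 2 * (a * (a * ip g g)) = (B_ i ^+ 2 * a ^+ 2 * ip g g / 2) * c0.
    by ring.
  have -> : B_ i ^+ 2 * L * a ^+ 2 / 2 * ip g g = (B_ i ^+ 2 * a ^+ 2 * ip g g / 2) * L.
    by ring.
  apply: ler_wpM2l; last exact: c0_le.
  apply: mulr_ge0; last lra.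
  by apply: mulr_ge0 => //; apply: mulr_ge0; exact: sqr_ge0.
- have hB : \big[Num.max/0]_(j < i) mmd ip Phi (dirac R (x (2 * j)%N))
                                             (dirac R (x (2 * j)%N.+1)) = B_ i.
    by rewrite /bmax; apply: eq_bigr => j _; rewrite mmd_dirac bb_nrm.
  by rewrite hB /nu; ring.
- set M1 := \big[Num.max/0]_(j < (2 * m)%N) Num.sqrt (k (x j) (x j)).
  set M2 := \big[Num.max/0]_(j < (2 * m)%N) mmd ip Phi (dirac R (x j)) (Pin R m x).
  have M10 : 0 <= M1.
    rewrite /M1; apply: (big_ind (fun v => 0 <= v)) => //.
      by move=> u v hu hv; rewrite le_max hu.
    by move=> j _; exact: sqrtr_ge0.
  have M20 : 0 <= M2.
    rewrite /M2; apply: (big_ind (fun v => 0 <= v)) => //.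
      by move=> u v hu hv; rewrite le_max hu.
    by move=> j _; rewrite mmd_Pin; exact: nrm_ge0.
  have bnd : B_ i <= 2 * Num.min M1 M2.
    rewrite /bmax; apply/Order.TotalTheory.bigmax_leP; split.
      by apply: mulr_ge0; [lra | rewrite le_min M10 M20].
    move=> j _.
    have hj := ltn_ord j.
    have h1 : (2 * j < 2 * m)%N by lia.
    have h2 : ((2 * j).+1 < 2 * m)%N by lia.
    have s1 := Order.TotalTheory.le_bigmax 0 (fun l : 'I_(2 * m) => Num.sqrt (k (x l) (x l))) (Ordinal h1).
    have s2 := Order.TotalTheory.le_bigmax 0 (fun l : 'I_(2 * m) => Num.sqrt (k (x l) (x l))) (Ordinal h2).
    have t1 := Order.TotalTheory.le_bigmax 0 (fun l : 'I_(2 * m) => mmd ip Phi (dirac R (x l)) (Pin R m x)) (Ordinal h1).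
    have t2 := Order.TotalTheory.le_bigmax 0 (fun l : 'I_(2 * m) => mmd ip Phi (dirac R (x l)) (Pin R m x)) (Ordinal h2).
    rewrite /= -/M1 -/M2 !mmd_Pin !hk in s1 s2 t1 t2.
    rewrite bb_nrm.
    have u1 : nrm (f_ j) <= 2 * M1.
      apply: le_trans (nrmB2 _ _) _; rewrite /nrm; lra.
    have u2 : nrm (f_ j) <= 2 * M2.
      apply: le_trans (nrmB3 _ _ mean) _; lra.
    have hmin : nrm (f_ j) / 2 <= Num.min M1 M2.
      by rewrite le_min; apply/andP; split; lra.
    lra.
  rewrite /nu.
  have -> : B_ i * Num.sqrt L / (2 * i%:R) = Num.sqrt L / (2 * i%:R) * B_ i by ring.
  apply: ler_wpM2l => //.
  by rewrite divr_ge0 ?sqrtr_ge0 // mulr_ge0 ?ler0n //; lra.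
Qed.

End KHmain.

Theorem propositionB2 (R : realType) (X : Type) (H : lmodType R)
  (ip : H -> H -> R) (Phi : X -> H) (k : X -> X -> R) (m : nat)
  (x : nat -> X) (delta : R) :
  inner_product ip ->
  (forall y z, k y z = ip (Phi y) (Phi z)) ->
  0 < delta < 1 ->
  (0 < m)%N ->
  exists E : {set signs m},
    1 - delta / 2 <= prob ip Phi k x delta E /\
    forall i : nat, (1 <= i <= m)%N ->
      [/\ subgaussian_on ip Phi k x delta
            (fun e => (2 * i%:R)^-1 *: psi Phi x e i)
            (nu k m x delta i) E,
          nu k m x delta i =
            Num.sqrt (logterm m delta) / (2 * i%:R) *
            \big[Num.max/0]_(j < i) mmd ip Phi (dirac R (x (2 * j)%N))
                                             (dirac R (x (2 * j)%N.+1)) &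
          nu k m x delta i <=
            Num.sqrt (logterm m delta) / (2 * i%:R) *
            (2 * Num.min (\big[Num.max/0]_(j < (2 * m)%N) Num.sqrt (k (x j) (x j)))
                         (\big[Num.max/0]_(j < (2 * m)%N)
                             mmd ip Phi (dirac R (x j)) (Pin R m x)))].
Proof.
move=> hip hk hd hm.
exact: (@main_res R X H ip Phi k m x delta hip hk hd hm).
Qed.
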